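(* Let $k,r,h$ be positive integers such that $\ell=\frac{k+h}{r}$ is an integer, and let $q$ be a prime power with $q\le\binom{\lfloor k/2\rfloor}{h-1}$. Consider a local $(k,r,h)$-code $C$ over $\mathbb{F}_q$ in which all coefficients of the heavy parities (i.e. the coefficients $c_{j,i}$ in heavy parity $j$ equal to $\sum_{i=1}^k c_{j,i}x_i$, $j\in[h]$, where $x_1,\dots,x_k$ are the data symbols) are drawn uniformly and independently at random from $\mathbb{F}_q$ (the grouping being fixed). Then the probability that $C$ is maximally recoverable is at most $\left(1-\frac{1}{2^h e^{h-1}}\right)^{k/2}$.
   Context: A local $(k,r,h)$-code over $\mathbb{F}_q$ (with $r\mid(k+h)$) is a linear systematic code of dimension $k$ and length $k+h+\frac{k+h}{r}$ consisting of $k$ data symbols $x_1,\dots,x_k$, $h$ heavy parity symbols (each an $\mathbb{F}_q$-linear combination of all data symbols), and, after partitioning the $k+h$ data and heavy parity symbols into $\frac{k+h}{r}$ groups of size $r$, one local parity per group equal to the sum of the group's symbols. A local group is such a group together with its local parity. The code is maximally recoverable if for every set $E$ of coordinates containing exactly one coordinate from each local group, puncturing the code in $E$ (deleting those coordinates) yields a maximum distance separable $[k+h,k]$ code (minimum distance $h+1$). *)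

(* Defs.v *)
From HB Require Import structures.
From mathcomp Require Import all_boot all_order all_algebra all_field.

Set Implicit Arguments. Unset Strict Implicit. Unset Printing Implicit Defensive.
Import GRing.Theory.
Local Open Scope ring_scope.

(* Data symbols x : 'rV_k; heavy parity j = \sum_i c j i * x i  (c : 'M_(h,k)).
   The k+h data+heavy symbols are indexed by 'I_(k+h): index s < k is data
   symbol s, index k + j is heavy parity j.
   The grouping is g : 'I_(k+h) -> 'I_l; local parity t = sum of the symbols s
   with g s = t.  Codeword coordinates: 'I_(k+h+l), the first k+h being the
   data/heavy symbols and the last l the local parities. *)

Section LocalCode.
Variables (F : finFieldType) (k h l : nat).

Definition heavy_gen (c : 'M[F]_(h, k)) : 'M[F]_(k, k + h) := row_mx 1%:M c^T.

Definition local_mx (g : 'I_(k + h) -> 'I_l) : 'M[F]_(k + h, l) :=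
  \matrix_(s, t) (g s == t)%:R.

Definition local_gen (c : 'M[F]_(h, k)) (g : 'I_(k + h) -> 'I_l)
  : 'M[F]_(k, k + h + l) :=
  row_mx (heavy_gen c) (heavy_gen c *m local_mx g).

Definition local_group (g : 'I_(k + h) -> 'I_l) (t : 'I_l) : {set 'I_(k + h + l)} :=
  [set i | match fintype.split i with inl s => g s == t | inr t' => t' == t end].

Definition punct_wt n (E : {set 'I_n}) (x : 'rV[F]_n) : nat :=
  #|[set i | (i \notin E) && (x 0 i != 0)]|.

(* The code generated by G (codewords m *m G), punctured in E, has dimension k
   (the message-to-punctured-codeword map is injective) and minimum distance d. *)
Definition punctured_dim_dist n (G : 'M[F]_(k, n)) (E : {set 'I_n}) (d : nat) : Prop :=
  [/\ (forall m : 'rV[F]_k, m != 0 -> exists i, i \notin E /\ (m *m G) 0 i != 0),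
      (forall m : 'rV[F]_k, m != 0 -> (d <= punct_wt E (m *m G))%N) &
      (exists m : 'rV[F]_k, m != 0 /\ punct_wt E (m *m G) = d)].

(* Maximal recoverability: for every E containing exactly one coordinate from
   each local group, the punctured code is an MDS [k+h,k] code, i.e. has
   dimension k and minimum distance h+1. *)
Definition max_recoverable (c : 'M[F]_(h, k)) (g : 'I_(k + h) -> 'I_l) : Prop :=
  forall E : {set 'I_(k + h + l)},
    (forall t : 'I_l, #|E :&: local_group g t| = 1%N) ->
    punctured_dim_dist (local_gen c g) E h.+1.

End LocalCode.

(* Main.v *)
Require Import Defs.
From HB Require Import structures.
From mathcomp Require Import all_boot all_order all_algebra all_field zify ring.
Set Implicit Arguments. Unset Strict Implicit. Unset Printing Implicit Defensive.
Import GRing.Theory.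

Lemma bonf (I T : finType) (A : I -> {set T}) :
  (2 * (\sum_i #|A i|) <= 2 * #|\bigcup_i A i| +
     \sum_i \sum_(j | j != i) #|A i :&: A j|)%N.
Proof.
have cE (B : {set T}) : #|B| = (\sum_v (v \in B : nat))%N.
  by rewrite -sum1_card big_mkcond /=; apply: eq_bigr => v _; case: (v \in B).
under eq_bigr do rewrite cE.
under [X in _ <= _ + X]eq_bigr do under eq_bigr do rewrite cE.
rewrite (cE (\bigcup_i A i)).
rewrite (exchange_big) /= !big_distrr /=.
have -> : \sum_i \sum_(j | j != i) \sum_v (v \in A i :&: A j : nat) =
   \sum_v \sum_i \sum_(j | j != i) (v \in A i :&: A j : nat).
  rewrite exchange_big /=; apply: eq_bigr => i _; by rewrite exchange_big.
rewrite -!big_split /=; apply: leq_sum => v _.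
set n := \sum_i (v \in A i : nat).
have X : \sum_i \sum_(j | j != i) (v \in A i :&: A j : nat) + n = n * n.
  rewrite /n big_distrl /= -big_split /=; apply: eq_bigr => i _.
  rewrite big_distrr /= [in RHS](bigD1 i) //= addnC.
  congr (_ + _); first by case: (v \in A i).
  apply: eq_bigr => j _; rewrite inE; by case: (v \in A i); case: (v \in A j).
have U : 0 < n -> v \in \bigcup_i A i.
  apply: contraTT => nU; rewrite -leqNgt leqn0 /n; apply/eqP; apply: big1 => i _.
  by case: (boolP (v \in A i)) => // vA; case/negP: nU; apply/bigcupP; exists i.
case: (posnP n) => [->|/U ->]; first by rewrite muln0.
move: X; set Y := (\sum_i _); move=> X.
have : n <= 2 \/ 3 <= n by lia.
case=> H; nia.
Qed.

Local Open Scope ring_scope.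
Section S.
Variable F : finFieldType.
Local Notation q := #|F|.

Definition supp n (a : 'rV[F]_n) : {set 'I_n} := [set i | a 0 i != 0].

Lemma card_supp_sub n (T : {set 'I_n}) :
  #|[set a : 'rV[F]_n | supp a \subset T]| = (q ^ #|T|)%N.
Proof.
have -> : q = #|[set: F]| by rewrite cardsT.
rewrite -(card_pffun_on 0 T [set: F]).
have -> : [set a : 'rV[F]_n | supp a \subset T] =
   (fun f : {ffun 'I_n -> F} => \row_i f i) @: [set f in pffun_on 0 T [set: F]].
  apply/setP => a; rewrite inE; apply/idP/imsetP.
    move=> sT; exists [ffun i => a 0 i].
      rewrite inE; apply/pffun_onP; split; last by move=> x; rewrite inE.
      apply/subsetP => i; rewrite !inE ffunE => nz; apply: (subsetP sT); by rewrite inE.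
    by apply/rowP => i; rewrite mxE ffunE.
  move=> [f]; rewrite inE => /pffun_onP [/subsetP sf _] ->.
  apply/subsetP => i; rewrite inE mxE => nz; exact: sf.
rewrite card_in_imset; first by apply: eq_card => f; rewrite inE.
move=> f1 f2 _ _ /rowP e; apply/ffunP => i; move: (e i); by rewrite !mxE.
Qed.

Variable h : nat.

Definition good n (D : 'M[F]_(n, h)) : Prop :=
  forall a : 'rV[F]_n, a != 0 -> (#|supp a| <= h)%N -> a *m D != 0.

Definition Hspan n (D : 'M[F]_(n, h)) (T : {set 'I_n}) : {set 'rV[F]_h} :=
  [set a *m D | a in [set a : 'rV[F]_n | supp a \subset T]].

Lemma supp_sub_B n (a b : 'rV[F]_n) (T : {set 'I_n}) : supp a \subset T -> supp b \subset T ->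
  supp (a - b) \subset T.
Proof.
move=> /subsetP sa /subsetP sb; apply/subsetP => i; rewrite inE !mxE => nz.
case: (boolP (a 0 i == 0)) => [/eqP a0|]; last by move=> nz'; apply: sa; rewrite inE.
apply: sb; rewrite inE; move: nz; rewrite a0 sub0r oppr_eq0; done.
Qed.

Lemma card_Hspan n (D : 'M[F]_(n, h)) (T : {set 'I_n}) : good D -> (#|T| <= h)%N ->
  #|Hspan D T| = (q ^ #|T|)%N.
Proof.
move=> gD hT; rewrite /Hspan card_in_imset ?card_supp_sub //.
move=> a1 a2; rewrite !inE => s1 s2 e; apply/eqP; rewrite -subr_eq0.
apply/negPn/negP => nz.
have := gD _ nz (leq_trans (subset_leq_card (supp_sub_B s1 s2)) hT).
by rewrite mulmxBl e subrr eqxx.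
Qed.

Lemma supp0 n (b : 'rV[F]_n) (T : {set 'I_n}) i :
  supp b \subset T -> i \notin T -> b 0 i = 0.
Proof.
move=> /subsetP sb iT; apply/eqP; apply/negPn/negP => nz.
by move: iT; rewrite (sb i) // inE.
Qed.

Lemma card_Hcap n (D : 'M[F]_(n, h)) (T T' : {set 'I_n}) : good D ->
  #|T| = h.-1 -> #|T'| = h.-1 -> T != T' -> (1 < h)%N ->
  (#|Hspan D T :&: Hspan D T'| <= q ^ h.-2)%N.
Proof.
move=> gD cT cT' neq h1.
have [x xT' xT] : exists2 x, x \in T' & x \notin T.
  apply/subsetPn; apply: contra neq => sub.
  by rewrite eq_sym eqEcard sub cT cT' leqnn.
pose P := [set a : 'rV[F]_n | (supp a \subset T') && (a *m D \in Hspan D T)].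
have s1 : Hspan D T :&: Hspan D T' \subset (fun a => a *m D) @: P.
  apply/subsetP => v; rewrite inE => /andP [vT /imsetP [a]]; rewrite inE => sa ev.
  apply/imsetP; exists a => //; by rewrite inE sa -ev vT.
apply: leq_trans (subset_leq_card s1) _; apply: leq_trans (leq_imset_card _ _) _.
pose z := fun a : 'rV[F]_n => a - a 0 x *: delta_mx 0 x.
have zinj : {in P &, injective z}.
  move=> a1 a2; rewrite !inE => /andP [s1' /imsetP [b1]]; rewrite inE => sb1 e1.
  move=> /andP [s2' /imsetP [b2]]; rewrite inE => sb2 e2 ez.
  pose al := a1 0 x - a2 0 x.
  have ea : a1 - a2 = al *: delta_mx 0 x.
    apply/rowP => i; have := congr1 (fun u : 'rV[F]_n => u 0 i) ez.
    rewrite /z !mxE => /eqP; rewrite subr_eq => /eqP ->; rewrite /al; ring.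
  pose w := al *: delta_mx 0 x - (b1 - b2).
  have wD : w *m D = 0.
    by rewrite /w mulmxBl -ea !mulmxBl -e1 -e2 subrr.
  have w0 : w = 0.
    apply/eqP; apply/negPn/negP => nz.
    have sw : supp w \subset x |: T.
      apply/subsetP => i; rewrite !inE !mxE; case: (eqVneq i x) => // nix /=.
      rewrite mulr0 add0r.
      case: (boolP (i \in T)) => // niT.
      by rewrite (supp0 sb1 niT) (supp0 sb2 niT) subrr oppr0 eqxx.
    have cw : (#|supp w| <= h)%N.
      apply: leq_trans (subset_leq_card sw) _.
      by rewrite cardsU1 xT cT; case: h h1.
    by move: (gD _ nz cw); rewrite wD eqxx.
  have : w 0 x = 0 by rewrite w0 mxE.
  rewrite /w !mxE (supp0 sb1 xT) (supp0 sb2 xT) !eqxx mulr1 subrr subr0 => al0.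
  by apply/eqP; rewrite -subr_eq0 ea al0 scale0r.
rewrite -(card_in_imset zinj).
have s2 : z @: P \subset [set b : 'rV[F]_n | supp b \subset T' :\ x].
  apply/subsetP => b /imsetP [a]; rewrite inE => /andP [sa _] ->; rewrite inE.
  apply/subsetP => i; rewrite !inE /z !mxE; case: (eqVneq i x) => [->|nix].
    by rewrite !eqxx mulr1 subrr eqxx.
  rewrite /= mulr0 subr0 => nz.
  by apply: (subsetP sa); rewrite inE.
apply: leq_trans (subset_leq_card s2) _.
rewrite card_supp_sub.
have := cardsD1 x T'; rewrite xT' cT' => e.
have -> : #|T' :\ x| = h.-2 by case: h e h1 => [|[|hh]] //= [] ->.
by [].
Qed.

Definition Sbad n (D : 'M[F]_(n, h)) : {set 'rV[F]_h} :=
  [set v : 'rV[F]_h | [forall T : {set 'I_n}, forall a : 'rV[F]_n,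
     ((#|T| == h.-1) && (supp a \subset T)) ==> (v != a *m D)]].

Lemma Sbad_card n (D : 'M[F]_(n, h)) : (1 < h)%N -> good D ->
  (q <= 'C(n, h.-1))%N -> (2 * #|Sbad D| <= q ^ h)%N.
Proof.
move=> h1 gD qC.
pose Ts := [set T : {set 'I_n} | #|T| == h.-1].
have le : (q <= #|Ts|)%N by rewrite card_draws card_ord.
pose tau (x : F) : {set 'I_n} := enum_val (widen_ord le (enum_rank x)).
have tauT x : tau x \in Ts := enum_valP _.
have tau_inj : injective tau.
  move=> x y /enum_val_inj /(congr1 val) /= e; apply: enum_rank_inj; exact: val_inj.
pose A x := Hspan D (tau x). pose U := \bigcup_x A x.
have sub : Sbad D \subset ~: U.
  apply/subsetP => v; rewrite inE => /forallP H; rewrite inE.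
  apply/bigcupP => [[x _ /imsetP [a]]]; rewrite inE => sa ev.
  move: (H (tau x)) => /forallP /(_ a) /implyP; move: (tauT x); rewrite inE => ->.
  by rewrite sa ev eqxx => /(_ isT).
have cT x : #|tau x| = h.-1 by move: (tauT x); rewrite inE => /eqP.
have cA x : #|A x| = (q ^ h.-1)%N.
  by rewrite /A card_Hspan // cT; case: h h1.
have cAA x y : x != y -> (#|A x :&: A y| <= q ^ h.-2)%N.
  move=> nxy; apply: card_Hcap => //; apply: contra nxy => /eqP /tau_inj ->//.
have B := bonf A.
have sumA : (\sum_x #|A x| = q * q ^ h.-1)%N.
  under eq_bigr do rewrite cA. by rewrite sum_nat_const.
have sumAA : (\sum_x \sum_(y | y != x) #|A x :&: A y| <= q * (q.-1 * q ^ h.-2))%N.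
  rewrite -sum_nat_const; apply: leq_sum => x _.
  apply: (@leq_trans (\sum_(y | y != x) q ^ h.-2)%N).
    by apply: leq_sum => y nxy; apply: cAA; rewrite eq_sym.
  by rewrite big_const iter_addn_0 cardC1 mulnC.
have cU : (#|U| + #|~: U| = q ^ h)%N by rewrite cardsC card_mx mul1n.
have cS := subset_leq_card sub.
rewrite sumA in B.
have eh : (q ^ h = q * (q * q ^ h.-2))%N by rewrite -!expnS; case: h h1 => [|[|hh]].
have eh1 : (q ^ h.-1 = q * q ^ h.-2)%N by rewrite -!expnS; case: h h1 => [|[|hh]].
have q1 : (0 < q)%N by apply/card_gt0P; exists 0.
move: B sumAA cU cS eh eh1 q1; set p := (q ^ h.-2)%N; set c := #|U|.
rewrite /=; move=> B sumAA cU cS eh eh1 q1.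
rewrite eh1 in B; rewrite eh in cU *.
have [q' eq'] : exists q', q = q'.+1 by exists q.-1; rewrite prednK.
rewrite eq' /= in sumAA B cU *; nia.
Qed.

Lemma leq_expr a b e : (a <= b)%N -> (a ^ e <= b ^ e)%N.
Proof. by move=> ab; elim: e => // e IH; rewrite !expnS leq_mul. Qed.

Lemma card_supp_row n1 n2 (a : 'rV[F]_n1) (b : 'rV[F]_n2) :
  (#|supp (row_mx a b)| <= #|supp a| + #|supp b|)%N.
Proof.
have sub : supp (row_mx a b) \subset @lshift n1 n2 @: supp a :|: @rshift n1 n2 @: supp b.
  apply/subsetP => i; rewrite inE; case: (split_ordP i) => j ->.
    rewrite row_mxEl => nz; rewrite inE; apply/orP; left; apply/imsetP; exists j => //.
    by rewrite inE.
  rewrite row_mxEr => nz; rewrite inE; apply/orP; right; apply/imsetP; exists j => //.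
  by rewrite inE.
apply: leq_trans (subset_leq_card sub) _; apply: leq_trans (leq_card_setU _ _) _.
by apply: leq_add; apply: leq_imset_card.
Qed.

Lemma good_split n0 m (D : 'M[F]_(n0 + m, h)) : (0 < h)%N -> good D ->
  good (usubmx D) /\ forall j, row j (dsubmx D) \in Sbad (usubmx D).
Proof.
move=> h0 gD; rewrite -[D]vsubmxK in gD; split.
  move=> a nz ca; have := gD (row_mx a 0).
  rewrite mul_row_col mul0mx addr0; apply.
    by rewrite row_mx_eq0 negb_and nz.
  have s0 : #|supp (0 : 'rV[F]_m)| = 0%N.
    by apply/eqP; rewrite cards_eq0; apply/eqP/setP => i; rewrite !inE mxE eqxx.
  by apply: leq_trans (card_supp_row _ _) _; rewrite s0 addn0.
move=> j; rewrite inE; apply/forallP => T; apply/forallP => a; apply/implyP.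
case/andP => /eqP cT sa; apply/negP => /eqP ev.
have := gD (row_mx a (- delta_mx 0 j)).
rewrite mul_row_col mulNmx -rowE -ev subrr eqxx; move=> H; suff : false by []; apply: H.
  rewrite row_mx_eq0 negb_and oppr_eq0; apply/orP; right.
  apply/negP => /eqP /matrixP /(_ 0 j); rewrite !mxE !eqxx => /eqP; by rewrite oner_eq0.
apply: leq_trans (card_supp_row _ _) _.
have c1 : (#|supp (- delta_mx 0 j : 'rV[F]_m)%R| <= 1)%N.
  apply: (@leq_trans #|[set j]|); last by rewrite cards1. apply: subset_leq_card; apply/subsetP => i.
  rewrite !inE !mxE; case: (eqVneq i j) => // _; by rewrite andbF oppr0 eqxx.
apply: leq_trans (leq_add (subset_leq_card sa) c1) _.
by rewrite cT addn1 prednK.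
Qed.

Lemma count_good n0 m (G : {set 'M[F]_(n0 + m, h)}) : (1 < h)%N ->
  (q <= 'C(n0, h.-1))%N -> (forall D, D \in G -> good D) ->
  (2 ^ m * #|G| <= q ^ (h * (n0 + m)))%N.
Proof.
move=> h1 qC gG.
pose phi (D : 'M[F]_(n0 + m, h)) : 'M[F]_(n0, h) * {ffun 'I_m -> 'rV[F]_h} := (usubmx D, [ffun j => row j (dsubmx D)]).
have phi_inj : injective phi.
  move=> D1 D2 [eu ed]; rewrite -[D1]vsubmxK -[D2]vsubmxK eu; congr col_mx.
  apply/row_matrixP => j; move/ffunP: ed => /(_ j); by rewrite !ffunE.
pose P := [set p : 'M[F]_(n0, h) * {ffun 'I_m -> 'rV[F]_h} |
   (2 * #|Sbad p.1| <= q ^ h)%N && (p.2 \in ffun_on (Sbad p.1))].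
have sub : phi @: G \subset P.
  apply/subsetP => p /imsetP [D DG ->]; rewrite inE /=.
  have [gu gd] := good_split (ltnW h1) (gG _ DG).
  rewrite Sbad_card //=; apply/ffun_onP => j; by rewrite ffunE.
have cG : #|G| = #|phi @: G| by rewrite card_imset.
have cE (B : {set 'M[F]_(n0, h) * {ffun 'I_m -> 'rV[F]_h}}) :
    #|B| = (\sum_p (p \in B : nat))%N.
  by rewrite -sum1_card big_mkcond /=; apply: eq_bigr => v _; case: (v \in B).
have cP : #|P| = (\sum_(DB : 'M[F]_(n0, h))
     ((2 * #|Sbad DB| <= q ^ h)%N : nat) * #|Sbad DB| ^ m)%N.
  rewrite cE (eq_bigr (fun p => ((p.1, p.2) \in P : nat))); last by case.
  rewrite -(pair_bigA _ (fun DB f => ((DB, f) \in P : nat))) /=.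
  apply: eq_bigr => DB _.
  rewrite (eq_bigr (fun f => ((2 * #|Sbad DB| <= q ^ h)%N : nat) *
                            (f \in ffun_on (Sbad DB) : nat))%N); last first.
    by move=> f _; rewrite inE /=; case: (_ <= _)%N; case: (_ \in _).
  rewrite -big_distrr /=; congr (_ * _)%N.
  rewrite -[m in RHS](card_ord m) -(card_ffun_on 'I_m (Sbad DB)).
  rewrite -sum1_card [RHS]big_mkcond /=; apply: congr_big => // f _; by case: (_ \in _).
rewrite cG; apply: leq_trans (leq_mul (leqnn _) (subset_leq_card sub)) _.
rewrite cP big_distrr /=.
apply: leq_trans (_ : (\sum_(DB : 'M[F]_(n0, h)) (q ^ h) ^ m)%N <= _)%N.
  apply: leq_sum => DB _; case: (boolP (2 * #|Sbad DB| <= q ^ h)%N) => H /=.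
    by rewrite mul1n -expnMn leq_expr.
  by rewrite mul0n muln0.
rewrite sum_nat_const card_mx -!expnM -expnD.
by rewrite mulnDr mulnC.
Qed.
End S.

Lemma count_good' (F : finFieldType) (h k n0 m : nat) (G : {set 'M[F]_(k, h)}) :
  k = (n0 + m)%N -> (1 < h)%N ->
  (#|F| <= 'C(n0, h.-1))%N -> (forall D, D \in G -> good D) ->
  (2 ^ m * #|G| <= #|F| ^ (h * k))%N.
Proof. by move=> ek; subst k; apply: count_good. Qed.

Lemma card_ff_gt1 (F : finFieldType) : (1 < #|F|)%N.
Proof. by apply/card_gt1P; exists 0, 1; rewrite !inE eq_sym oner_eq0. Qed.


Lemma MR_good (F : finFieldType) (k h l : nat) (g : 'I_(k + h) -> 'I_l)
   (c : 'M[F]_(h, k)) : max_recoverable c g -> good (c^T).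
Proof.
move=> MR a nz ca; apply/negP => /eqP z.
pose E := [set @rshift (k + h) l t | t : 'I_l].
have sr t : fintype.split (@rshift (k + h) l t) = inr t := unsplitK (inr t).
have hE : forall t : 'I_l, #|E :&: local_group g t| = 1%N.
  move=> t; rewrite -(cards1 (@rshift (k + h) l t)); apply: eq_card => i.
  rewrite !inE; apply/andP/eqP.
    case=> /imsetP [t' _ ->]; rewrite sr => /eqP -> //.
  move=> ->; split; first by apply/imsetP; exists t.
  by rewrite sr.
have [_ H _] := MR E hE.
have := H a nz; rewrite /punct_wt.
have ex : a *m local_gen c g =
    row_mx (row_mx a 0) (row_mx a 0 *m local_mx F g).
  by rewrite /local_gen /heavy_gen !mul_mx_row mulmxA mul_mx_row mulmx1 z.
rewrite ex.
have sub : [set i | (i \notin E) && ((row_mx (row_mx a 0) (row_mx a 0 *m local_mx F g)) 0 i != 0)]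
    \subset [set @lshift (k + h) l (@lshift k h j) | j in supp a].
  apply/subsetP => i; rewrite inE; case: (split_ordP i) => j ->.
    rewrite row_mxEl; case: (split_ordP j) => j' -> /andP [_].
      by rewrite row_mxEl => nz'; apply/imsetP; exists j' => //; rewrite inE.
    by rewrite row_mxEr mxE eqxx.
  by rewrite (_ : _ \in E = true) //; apply/imsetP; exists j.
move=> Hh; have H2 := leq_trans (subset_leq_card sub) (leq_imset_card _ _).
by have := leq_trans Hh H2; rewrite ltnNge ca.
Qed.

From Stdlib Require Import Reals Lra Psatz.
Lemma INR_expn a b : INR (expn a b) = pow (INR a) b.
Proof. elim: b => // b IH; by rewrite expnS -multE mult_INR IH. Qed.

Local Close Scope ring_scope.
Theorem theorem20 (F : finFieldType) (k r h l : nat)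
  (g : 'I_(k + h) -> 'I_l) :
  (0 < k)%N -> (0 < r)%N -> (0 < h)%N ->
  (l * r = k + h)%N ->
  (forall t : 'I_l, #|[set s | g s == t]| = r) ->
  (#|F| <= 'C(k./2, h.-1))%N ->
  forall MR : {set 'M[F]_(h, k)},
  (forall c : 'M[F]_(h, k), c \in MR <-> max_recoverable c g) ->
  (INR #|MR|
     / INR #|{: 'M[F]_(h, k)}|
   <= Rpower (1 - / (pow 2 h * pow (exp 1) (h - 1))) (INR k / 2))%R.
Proof.
move=> k0 r0 h0 elr cg qC MR HMR.
have q2 := card_ff_gt1 F.
have h1 : (1 < h)%N.
  case: (ltngtP 1 h) => // H.
    by rewrite ltnNge h0 in H.
  by move: qC; rewrite -H bin0 => /(leq_trans q2).
pose n0 := k./2; pose m := (k - n0)%N.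
have eo := odd_double_half k.
have ek : k = (n0 + m)%N.
  rewrite /m /n0; rewrite -addnn in eo; lia.
have Hkm : (k <= m + m)%coq_nat.
  rewrite /m /n0; rewrite -addnn in eo; have : (odd k <= 1)%N by case: (odd k).
  lia.
pose G := [set trmx c | c in MR].
have HG : forall D, D \in G -> good D.
  by move=> D /imsetP [c /HMR cM ->]; apply: MR_good cM.
have key := count_good' ek h1 qC HG.
have cG : #|G| = #|MR| by rewrite card_imset //; exact: trmx_inj.
rewrite cG mulnC in key.
rewrite card_mx.
set N := #|MR| in key *.
set T := expn #|F| (h * k) in key *.
have key' : (INR N * 2 ^ m <= INR T)%R.
  rewrite -(INR_expn 2 m) -mult_INR; apply: le_INR; apply/leP; exact: key.
have Tpos : (0 < INR T)%R.
  apply: lt_0_INR; apply/ltP; rewrite /T expn_gt0; by case: #|F| q2.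
have p2 : (0 < 2 ^ m)%R by apply: pow_lt; lra.
have N0 : (0 <= INR N)%R by apply: pos_INR.
apply: (Rle_trans _ (/ 2 ^ m)).
  have e : (INR N / INR T = INR N * 2 ^ m * / INR T * / 2 ^ m)%R by field; lra.
  rewrite e.
  have e2 : (/ 2 ^ m = INR T * / INR T * / 2 ^ m)%R by field; lra.
  rewrite [X in (_ <= X)%R]e2.
  apply: Rmult_le_compat_r; first by left; apply: Rinv_0_lt_compat.
  apply: Rmult_le_compat_r => //; by left; apply: Rinv_0_lt_compat.
have l2 : (0 < ln 2)%R by rewrite -ln_1; apply: ln_increasing; lra.
have Hx : (/ 2 <= 1 - / (2 ^ h * exp 1 ^ (h - 1)))%R.
  have e1 : (1 <= exp 1)%R by have := exp_ineq1_le 1; lra.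
  have E1 : (1 <= exp 1 ^ (h - 1))%R by apply: pow_R1_Rle.
  have E2 : (2 <= 2 ^ h)%R.
    rewrite -(prednK h0) /=.
    have : (1 <= 2 ^ h.-1)%R by apply: pow_R1_Rle; lra.
    lra.
  have : (/ (2 ^ h * exp 1 ^ (h - 1)) <= / 2)%R.
    apply: Rinv_le_contravar; first lra.
    nra.
  lra.
apply: (Rle_trans _ (Rpower (/ 2) (INR k / 2))).
  rewrite -pow_inv -Rpower_pow; last lra.
  rewrite /Rpower ln_Rinv; last lra.
  have : (INR k <= INR m + INR m)%R by rewrite -plus_INR; apply: le_INR.
  move=> Hk.
  have : (INR m * - ln 2 <= INR k / 2 * - ln 2)%R by nra.
  case=> [lt|->]; last lra.
  by left; apply: exp_increasing.
apply: Rle_Rpower_l.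
  have := pos_INR k; lra.
split; lra.
Qed.
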